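(* For every $\rho\in\hom_0(\mathrm{PSL}_2(\mathbb Z),\mathrm{Isom}(X))$, the orientation-preserving isometry $\rho(baba)$ is given by a matrix in $\mathrm{SL}_3(\mathbb R)$ satisfying $$\mathrm{tr}(\rho(baba))=\mathrm{tr}(\rho(baba)^{-1}).$$
   Context: $X=\mathrm{SL}_3(\mathbb R)/\mathrm{SO}(3)$ is the Riemannian symmetric space and $\mathrm{Isom}(X)$ its full isometry group. Orientation-preserving isometries are $[M]\mapsto[gM]$ with $g\in\mathrm{SL}_3(\mathbb R)$ (identified with the matrix $g$); with $M^*=(M^{-1})^T$, orientation-reversing isometries have the form $[M]\mapsto[AM^*]$, and the inversion at $[A]$ is $[M]\mapsto[AA^TM^*]$. Let $R_\theta=\begin{pmatrix}1&0&0\\0&\cos\theta&-\sin\theta\\0&\sin\theta&\cos\theta\end{pmatrix}$. Present $\mathrm{PSL}_2(\mathbb Z)=\langle a,b\mid a^2=b^3=1\rangle$; $\hom_0(\mathrm{PSL}_2(\mathbb Z),\mathrm{Isom}(X))$ is the set of homomorphisms with $\rho(a)$ an inversion and $\rho(b)$ conjugate to $[M]\mapsto[R_{2\pi/3}M]$. *)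

(* Defs.v *)
From HB Require Import structures.
From mathcomp Require Import all_boot all_order all_algebra.
From mathcomp Require Import all_classical all_reals all_analysis.
Set Implicit Arguments. Unset Strict Implicit. Unset Printing Implicit Defensive.
Import Order.TTheory GRing.Theory Num.Theory.
Local Open Scope ring_scope.

(* Isom(X), X = SL_3(R)/SO(3), is modelled as pairs (o, g) with g in SL_3(R):
   (false, g) is the orientation-preserving isometry [M] |-> [g M],
   (true,  A) is the orientation-reversing isometry  [M] |-> [A M^*],
   where M^* = (M^{-1})^T.  Both parametrizations are bijective. *)

Definition mstar {R : realType} (M : 'M[R]_3) : 'M[R]_3 := (invmx M)^T.

Definition isom {R : realType} (x : bool * 'M[R]_3) : Prop := \det x.2 = 1.

(* composition x o y (first y, then x):
   g o h = gh, g o s_B = s_{gB}, s_A o h = s_{A h^*}, s_A o s_B = A B^*. *)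
Definition imul {R : realType} (x y : bool * 'M[R]_3) : bool * 'M[R]_3 :=
  (addb x.1 y.1, x.2 *m (if x.1 then mstar y.2 else y.2)).

Definition iid {R : realType} : bool * 'M[R]_3 := (false, 1%:M).

Definition Rot {R : realType} (t : R) : 'M[R]_3 :=
  \matrix_(i < 3, j < 3)
    (if (i == 0%N :> nat) && (j == 0%N :> nat) then 1
     else if (i == 0%N :> nat) || (j == 0%N :> nat) then 0
     else if (i == 1%N :> nat) && (j == 1%N :> nat) then cos t
     else if (i == 1%N :> nat) && (j == 2%N :> nat) then - sin t
     else if (i == 2%N :> nat) && (j == 1%N :> nat) then sin t
     else cos t).

(* the inversion at [A] : [M] |-> [A A^T M^*] *)
Definition is_inversion {R : realType} (x : bool * 'M[R]_3) : Prop :=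
  exists A : 'M[R]_3, \det A = 1 /\ x = (true, A *m A^T).

(* x is conjugate in Isom(X) to [M] |-> [R_{2pi/3} M]:  x = h r h^{-1},
   written equivalently as x o h = h o r *)
Definition conj_rot {R : realType} (x : bool * 'M[R]_3) : Prop :=
  exists h : bool * 'M[R]_3, isom h /\
    imul x h = imul h (false, Rot (2 * pi / 3)).

(* A homomorphism rho : PSL_2(Z) = <a, b | a^2 = b^3 = 1> -> Isom(X) is the
   same as a pair (rho a, rho b) = (alpha, beta) with alpha^2 = beta^3 = 1. *)
Definition hom0 {R : realType} (alpha beta : bool * 'M[R]_3) : Prop :=
  [/\ isom alpha, isom beta, imul alpha alpha = iid &
      imul beta (imul beta beta) = iid] /\ is_inversion alpha /\ conj_rot beta.

(* Main.v *)
Require Import Defs.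
From HB Require Import structures.
From mathcomp Require Import all_boot all_order all_algebra.
From mathcomp Require Import all_classical all_reals all_analysis.
From mathcomp Require Import ring.
Import Order.TTheory GRing.Theory Num.Theory.
Local Open Scope ring_scope.

Lemma key3 (R : comNzRingType) (A : 'M[R]_3) :
  \det (A - 1%:M) = \det A - \tr (\adj A) + \tr A - 1.
Proof.
set f := fun i j : nat => A (inord i) (inord j).
have E : forall i j, A i j = f i j by move=> i j; rewrite /f !inord_val.
rewrite /mxtrace !big_ord_recl big_ord0 !mxE.
rewrite !(expand_det_row _ ord0) !big_ord_recl !big_ord0 /cofactor.
rewrite !(expand_det_row _ ord0) !big_ord_recl !big_ord0 /cofactor !det_mx11 !mxE !E /=.
rewrite /bump /= ?(add0n, addn0, add1n). ring.
Qed.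

Lemma det_skew (R : realType) (K : 'M[R]_3) : K^T = - K -> \det K = 0.
Proof.
move=> HK.
have : \det K = - \det K.
  rewrite -{1}det_tr HK -scaleN1r detZ; ring.
move=> /eqP; rewrite -subr_eq0 opprK -mulr2n mulrn_eq0 /=.
by move/eqP.
Qed.

Theorem lemma4p3 (R : realType) (alpha beta : bool * 'M[R]_3) :
  hom0 alpha beta ->
  let g := imul beta (imul alpha (imul beta alpha)) in
  [/\ g.1 = false, \det g.2 = 1 & \tr g.2 = \tr (invmx g.2)].
Proof.
move=> [[_ isb _ _] [[A [dA ->]] [h [_ hc]]]].
case: beta isb hc => b B /= dB hc.
have b0 : b = false.
  by clear dB; move: (congr1 fst hc); rewrite /imul /= addbF; case: (b); case: (h.1).
have {}dB : \det B = 1 := dB. subst b.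
set S := A *m A^T.
have St : S^T = S by rewrite /S trmx_mul trmxK.
have dS : \det S = 1 by rewrite /S det_mulmx det_tr dA mulr1.
have uB : B \in unitmx by rewrite unitmxE dB unitr1.
have uS : S \in unitmx by rewrite unitmxE dS unitr1.
have uBS : B *m S \in unitmx by rewrite unitmx_mul uB uS.
have dM : \det (mstar (B *m S)) = 1.
  by rewrite /mstar det_tr det_inv det_mulmx dB dS mulr1 invr1.
rewrite /imul /=.
set X := B *m (S *m mstar (B *m S)).
have dX : \det X = 1 by rewrite /X det_mulmx (det_mulmx S) dB dS dM !mulr1.
split => //.
have hinv : invmx X = \adj X.
  by rewrite /invmx unitmxE dX unitr1 invr1 scale1r.
have hK : \det (X - 1%:M) = 0.
  have -> : X - 1%:M = (B *m S - (B *m S)^T) *m mstar (B *m S).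
    rewrite mulmxBl /X mulmxA /mstar trmx_inv mulmxV //.
    by rewrite unitmx_tr.
  rewrite det_mulmx det_skew ?mul0r //.
  by rewrite linearB /= trmxK opprB.
move: hK; rewrite key3 dX hinv.
set t := \tr X; set u := \tr (\adj X) => H.
have -> : t = (1 - u + t - 1) + u by ring.
by rewrite H add0r.
Qed.
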